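(* Let $p$ be an integer with $|p|>1$ and let $G=\mathbb{Z}[1/p]\rtimes\mathbb{Z}$ with multiplication $(f_1,c_1)(f_2,c_2)=(f_1+p^{-c_1}f_2,\,c_1+c_2)$. Let $C=\{(f_i,c_i)\}$ be a finite generating set of $G$ closed under inverses, let $c=\max\{c_i \mid (f_i,c_i)\in C\}$, and let $B(n)$ denote the set of elements of $G$ of word length at most $n$ with respect to $C$. Then there is a constant $M$ (depending on $p$ and $C$) such that for every $n\ge 0$ and every element $(f,0)\in B(n)$, either $|f|\le M|p|^{nc/4}$ or $\mathrm{denom}(f)\le M|p|^{nc/4}$. Further, for every such $(f,0)\in B(n)$, both $|f|\le M|p|^{nc/2}$ and $\mathrm{denom}(f)\le M|p|^{nc/2}$.
   Context: $G$ is isomorphic to the Baumslag-Solitar group $B_{1,p}=\langle a,t\mid t^{-1}at=a^p\rangle$. Every element of $\mathbb{Z}[1/p]$ has the form $m/p^{n}$ with $m,n\in\mathbb{Z}$. For $f\in\mathbb{Z}[1/p]$, $|f|$ is its usual absolute value, and the denominator $\mathrm{denom}(f)$ is $|p|^{n}$ where $n\ge 0$ is the least nonnegative integer such that $f=m/p^{n}$ for some integer $m$. *)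

(* Defs.v *)
From Stdlib Require Import Reals ZArith List.
Open Scope R_scope.

(* Elements of G = Z[1/p] x| Z are pairs (f, c) with f a real in Z[1/p]. *)
Definition in_Zp (p : Z) (f : R) : Prop :=
  exists (m : Z) (k : nat), f = IZR m / (IZR p ^ k).

Definition in_G (p : Z) (g : R * Z) : Prop := in_Zp p (fst g).

Definition gmul (p : Z) (x y : R * Z) : R * Z :=
  (fst x + powerRZ (IZR p) (- snd x) * fst y, (snd x + snd y)%Z).

Definition gone : R * Z := (0, 0%Z).

Definition ginv (p : Z) (x : R * Z) : R * Z :=
  (- (powerRZ (IZR p) (snd x) * fst x), (- snd x)%Z).

Definition word_prod (p : Z) (w : list (R * Z)) : R * Z :=
  fold_right (gmul p) gone w.

Definition in_ball (p : Z) (C : list (R * Z)) (n : nat) (g : R * Z) : Prop :=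
  exists w : list (R * Z),
    (forall x, In x w -> In x C) /\ (length w <= n)%nat /\ word_prod p w = g.

(* C generates G: every element of G is a finite product of elements of C
   (C is closed under inverses, so this is the usual notion). *)
Definition generates (p : Z) (C : list (R * Z)) : Prop :=
  forall g, in_G p g -> exists w : list (R * Z),
    (forall x, In x w -> In x C) /\ word_prod p w = g.

Definition is_denom (p : Z) (f : R) (d : R) : Prop :=
  exists k : nat,
    d = IZR (Z.abs p) ^ k /\
    (exists m : Z, f = IZR m / (IZR p ^ k)) /\
    (forall (k' : nat) (m' : Z), f = IZR m' / (IZR p ^ k') -> (k <= k')%nat).

(* Main.v *)
Require Import Defs.
From Stdlib Require Import Reals ZArith List Lia Lra.
Open Scope R_scope.

Fixpoint sig (w : list (R * Z)) : Z :=
  match w with nil => 0%Z | x :: w' => (snd x + sig w')%Z end.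
Fixpoint mn (w : list (R * Z)) : Z :=
  match w with nil => 0%Z | x :: w' => Z.min (mn w') (snd x + sig w') end.
Fixpoint Asum (q : R) (w : list (R * Z)) : R :=
  match w with nil => 0 | x :: w' => Rpower q (IZR (snd x + sig w')) + Asum q w' end.

Lemma snd_word p w : snd (word_prod p w) = sig w.
Proof. induction w as [|x w IH]; simpl; auto. unfold gmul; simpl. now rewrite IH. Qed.

Lemma fst_word p x w : fst (word_prod p (x :: w)) =
  fst x + powerRZ (IZR p) (- snd x) * fst (word_prod p w).
Proof. reflexivity. Qed.

Lemma mn_le w : (mn w <= 0 /\ mn w <= sig w)%Z.
Proof. induction w as [|x w IH]; simpl; lia. Qed.

Lemma Rabs_powerRZ x z : Rabs (powerRZ x z) = powerRZ (Rabs x) z.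
Proof. destruct z; simpl; auto.
 - apply Rabs_R1.
 - symmetry; apply RPow_abs.
 - rewrite Rabs_inv. now rewrite <- RPow_abs. Qed.

Lemma Rpower_mono q a b : 1 <= q -> a <= b -> Rpower q a <= Rpower q b.
Proof. intros; apply Rle_Rpower; auto. Qed.

Lemma Rpower_pos q a : 0 < Rpower q a.
Proof. unfold Rpower; apply exp_pos. Qed.

Lemma core (q : R) (hq : 2 <= q) (c : Z) (hc : (1 <= c)%Z) (K0 : R)
  (hK0 : 2 + K0 * Rpower q (-1/2) <= K0) (hK01 : 1 <= K0) :
  forall w, (forall x, In x w -> (- c <= snd x <= c)%Z) ->
  (sig w - 2 * mn w <= Z.of_nat (length w) * c)%Z /\
  Asum q w <= K0 * Rpower q (IZR (2 * (Z.of_nat (length w) * c + Z.abs (sig w)) + 4 * mn w) / 4)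
              - Rpower q (IZR (sig w)) + 2 * INR (length w).
Proof.
  induction w as [|x w IH]; intros Hw.
  - simpl. split; [lia|]. rewrite Rpower_O by lra.
    replace (0/4) with 0 by field. rewrite Rpower_O by lra. lra.
  - destruct IH as [J IH]. { intros y Hy; apply Hw; now right. }
    assert (Hx := Hw x (or_introl eq_refl)).
    destruct (mn_le w) as [m0 m1].
    set (n := length w) in *. set (s := sig w) in *. set (m := mn w) in *.
    set (d := snd x) in *.
    cbn [Asum sig mn length]. fold n s m d.
    rewrite Nat2Z.inj_succ, S_INR.
    assert (J' : (d + s - 2 * Z.min m (d + s) <= Z.succ (Z.of_nat n) * c)%Z) by nia.
    split; [exact J'|].
    set (E := (2 * (Z.of_nat n * c + Z.abs s) + 4 * m)%Z) in *.
    set (E' := (2 * (Z.succ (Z.of_nat n) * c + Z.abs (d + s)) + 4 * Z.min m (d + s))%Z).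
    assert (Pq : 0 <= Rpower q (IZR s)) by (left; apply Rpower_pos).
    destruct (Z_le_gt_dec (d + s) 0) as [Hneg|Hpos].
    + assert (HE : (E <= E')%Z) by (unfold E, E'; nia).
      assert (H1 : Rpower q (IZR (d + s)) <= 1).
      { rewrite <- (Rpower_O q) by lra. apply Rpower_mono; [lra|]. now apply IZR_le. }
      assert (H2 : Rpower q (IZR E / 4) <= Rpower q (IZR E' / 4)).
      { apply Rpower_mono; [lra|]. apply IZR_le in HE. lra. }
      nra.
    + assert (Hm : Z.min m (d + s) = m) by lia.
      destruct (Z.eq_dec d (- c)) as [Hd|Hd].
      * assert (HE : E' = E) by (unfold E, E'; rewrite Hm; nia).
        rewrite HE.
        assert (H3 : 2 * Rpower q (IZR (d + s)) <= Rpower q (IZR s)).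
        { replace (IZR s) with (IZR (d + s) + IZR c) by (rewrite plus_IZR; rewrite Hd, opp_IZR; ring).
          rewrite Rpower_plus.
          assert (2 <= Rpower q (IZR c)).
          { apply Rle_trans with (Rpower q 1). rewrite Rpower_1; lra.
            apply Rpower_mono; [lra|]. apply IZR_le in hc; exact hc. }
          assert (0 < Rpower q (IZR (d+s))) by apply Rpower_pos. nra. }
        lra.
      * assert (HE : (E + 2 <= E')%Z) by (unfold E, E'; rewrite Hm; nia).
        assert (HE2 : (4 * (d + s) <= E')%Z) by (unfold E'; rewrite Hm; nia).
        assert (H4 : Rpower q (IZR (d + s)) <= Rpower q (IZR E' / 4)).
        { apply Rpower_mono; [lra|]. apply IZR_le in HE2. rewrite mult_IZR in HE2. simpl in HE2. lra. }
        assert (H5 : Rpower q (IZR E / 4) <= Rpower q (IZR E' / 4) * Rpower q (-1/2)).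
        { rewrite <- Rpower_plus. apply Rpower_mono; [lra|]. apply IZR_le in HE.
          rewrite plus_IZR in HE. lra. }
        assert (P' : 0 <= Rpower q (IZR E' / 4)) by (left; apply Rpower_pos).
        assert (H6 : (2 + K0 * Rpower q (-1/2)) * Rpower q (IZR E' / 4) <= K0 * Rpower q (IZR E' / 4))
          by (apply Rmult_le_compat_r; auto).
        nra.
Qed.

Lemma fst_bound p (hp : (1 < Z.abs p)%Z) F (hF : 0 <= F) : forall w,
  (forall x, In x w -> Rabs (fst x) <= F) ->
  Rabs (fst (word_prod p w)) * Rpower (IZR (Z.abs p)) (IZR (sig w)) <= F * Asum (IZR (Z.abs p)) w.
Proof.
  assert (hq : 1 < IZR (Z.abs p)) by (apply IZR_lt; lia).
  induction w as [|x w IH]; intros Hw.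
  - simpl. rewrite Rabs_R0. lra.
  - rewrite fst_word. cbn [sig Asum].
    assert (IH' := IH (fun y Hy => Hw y (or_intror Hy))).
    assert (Hx := Hw x (or_introl eq_refl)).
    set (q := IZR (Z.abs p)) in *.
    assert (Hpw : Rabs (powerRZ (IZR p) (- snd x)) = Rpower q (IZR (- snd x))).
    { rewrite Rabs_powerRZ, <- abs_IZR. apply powerRZ_Rpower. lra. }
    assert (Hsplit : Rpower q (IZR (- snd x)) * Rpower q (IZR (snd x + sig w)) = Rpower q (IZR (sig w))).
    { rewrite <- Rpower_plus. f_equal. rewrite plus_IZR, opp_IZR. ring. }
    assert (P1 : 0 <= Rpower q (IZR (snd x + sig w))) by (left; apply Rpower_pos).
    assert (Htri : Rabs (fst x + powerRZ (IZR p) (- snd x) * fst (word_prod p w))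
       <= Rabs (fst x) + Rpower q (IZR (- snd x)) * Rabs (fst (word_prod p w))).
    { rewrite <- Hpw, <- Rabs_mult. apply Rabs_triang. }
    apply Rle_trans with ((Rabs (fst x) + Rpower q (IZR (- snd x)) * Rabs (fst (word_prod p w)))
                          * Rpower q (IZR (snd x + sig w))).
    { apply Rmult_le_compat_r; auto. }
    rewrite Rmult_plus_distr_r.
    replace (Rpower q (IZR (- snd x)) * Rabs (fst (word_prod p w)) * Rpower q (IZR (snd x + sig w)))
      with (Rabs (fst (word_prod p w)) * Rpower q (IZR (sig w))) by (rewrite <- Hsplit; ring).
    assert (Rabs (fst x) * Rpower q (IZR (snd x + sig w)) <= F * Rpower q (IZR (snd x + sig w)))
      by (apply Rmult_le_compat_r; auto).
    lra.
Qed.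

Definition isZ (r : R) := exists z : Z, r = IZR z.

Lemma powerRZ_IZR p z : (0 <= z)%Z -> powerRZ (IZR p) z = IZR (p ^ z).
Proof. intros Hz. rewrite <- (Z2Nat.id z Hz) at 1. rewrite <- pow_powerRZ, pow_IZR.
  now rewrite Z2Nat.id. Qed.

Lemma isZ_mono p (hp : p <> 0%Z) f a b : (a <= b)%Z -> isZ (f * powerRZ (IZR p) a) -> isZ (f * powerRZ (IZR p) b).
Proof. intros Hab [z Hz]. exists (z * p ^ (b - a))%Z.
  assert (E : powerRZ (IZR p) b = powerRZ (IZR p) a * powerRZ (IZR p) (b - a)).
  { rewrite <- powerRZ_add by (apply not_0_IZR; auto). f_equal; ring. }
  rewrite E, mult_IZR, <- Hz, <- powerRZ_IZR by lia. ring. Qed.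

Lemma int_word p (hp : p <> 0%Z) K : forall w,
  (forall x, In x w -> isZ (fst x * powerRZ (IZR p) K)) ->
  isZ (fst (word_prod p w) * powerRZ (IZR p) (K + sig w - mn w)).
Proof.
  assert (hP : IZR p <> 0) by (apply not_0_IZR; auto).
  induction w as [|x w IH]; intros Hw.
  - simpl. exists 0%Z. ring.
  - rewrite fst_word. cbn [sig mn].
    assert (IH' := IH (fun y Hy => Hw y (or_intror Hy))).
    assert (Hx := Hw x (or_introl eq_refl)).
    destruct (mn_le w).
    assert (A1 : isZ (fst x * powerRZ (IZR p) (K + (snd x + sig w) - Z.min (mn w) (snd x + sig w))))
      by (apply isZ_mono with K; auto; lia).
    assert (A2 : isZ (fst (word_prod p w) * powerRZ (IZR p) (- snd x + (K + (snd x + sig w) - Z.min (mn w) (snd x + sig w)))))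
      by (apply isZ_mono with (K + sig w - mn w)%Z; auto; lia).
    destruct A1 as [z1 H1], A2 as [z2 H2]. exists (z1 + z2)%Z.
    rewrite plus_IZR, <- H1, <- H2, powerRZ_add by auto. ring.
Qed.

Lemma FK_exists p (hp : p <> 0%Z) C : (forall x, In x C -> in_G p x) ->
  exists F K, 0 <= F /\ (0 <= K)%Z /\ forall x, In x C -> Rabs (fst x) <= F /\ isZ (fst x * powerRZ (IZR p) K).
Proof.
  assert (hP : IZR p <> 0) by (apply not_0_IZR; auto).
  induction C as [|y C IH]; intros HC.
  - exists 0, 0%Z. split; [lra|split; [lia|]]. intros x0 [].
  - destruct IH as [F [K [HF [HK H]]]]. { intros; apply HC; now right. }
    destruct (HC y (or_introl eq_refl)) as [m [k Hk]].
    exists (Rmax F (Rabs (fst y))), (Z.max K (Z.of_nat k)).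
    split. { apply Rle_trans with F; auto; apply Rmax_l. }
    split. { lia. }
    intros x0 [<-|Hx].
    + split. apply Rmax_r. apply isZ_mono with (Z.of_nat k); auto; [lia|].
      exists m. rewrite Hk, <- pow_powerRZ. field. apply pow_nonzero; auto.
    + destruct (H x0 Hx) as [H1 H2]. split. apply Rle_trans with F; auto; apply Rmax_l.
      apply isZ_mono with K; auto; lia.
Qed.

Theorem lemma1 (p : Z) (hp : (1 < Z.abs p)%Z) (C : list (R * Z)) (c : Z)
  (hCG : forall x, In x C -> in_G p x)
  (hCinv : forall x, In x C -> In (ginv p x) C)
  (hgen : generates p C)
  (hc_in : exists x, In x C /\ snd x = c)
  (hc_max : forall x, In x C -> (snd x <= c)%Z) :
  exists M : R,
    forall (n : nat) (f : R), in_ball p C n (f, 0%Z) ->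
      (Rabs f <= M * Rpower (IZR (Z.abs p)) (INR n * IZR c / 4)
       \/ (forall d, is_denom p f d ->
             d <= M * Rpower (IZR (Z.abs p)) (INR n * IZR c / 4))) /\
      Rabs f <= M * Rpower (IZR (Z.abs p)) (INR n * IZR c / 2) /\
      (forall d, is_denom p f d ->
         d <= M * Rpower (IZR (Z.abs p)) (INR n * IZR c / 2)).
Proof.
  assert (hp0 : p <> 0%Z) by lia.
  assert (hP : IZR p <> 0) by (apply not_0_IZR; auto).
  assert (Hsnd : forall x, In x C -> (- c <= snd x <= c)%Z).
  { intros x Hx. split; [|auto]. assert (H := hc_max _ (hCinv x Hx)). simpl in H. lia. }
  assert (hc : (1 <= c)%Z).
  { destruct (hgen (0, 1%Z)) as [w [Hw Hpr]].
    { exists 0%Z, 0%nat. simpl. field. }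
    assert (H := snd_word p w). rewrite Hpr in H. simpl in H.
    destruct (Z_le_gt_dec 1 c) as [|Hc]; auto. exfalso.
    assert (forall w, (forall x, In x w -> In x C) -> (sig w <= 0)%Z).
    { induction w0 as [|y w0 IH]; intros Hy; simpl; [lia|].
      assert (Ha := hc_max y (Hy y (or_introl eq_refl))). assert (Hb := IH (fun z Hz => Hy z (or_intror Hz))). lia. }
    assert (H1 := H0 w Hw). lia. }
  destruct (FK_exists p hp0 C hCG) as [F [K [HF [HK HFK]]]].
  set (q := IZR (Z.abs p)).
  assert (hq : 2 <= q) by (unfold q; apply IZR_le; lia).
  set (T := Rpower q).
  assert (Tmono : forall a b, a <= b -> T a <= T b) by (intros; apply Rpower_mono; lra).
  assert (Tpos : forall a, 0 < T a) by (intros; apply Rpower_pos).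
  set (r := T (1/2)).
  assert (hr : 1 < r).
  { unfold r, T. assert (H0 : Rpower q 0 < Rpower q (1/2)) by (apply Rpower_lt; lra).
    rewrite Rpower_O in H0 by lra. exact H0. }
  set (K0 := 2 * r / (r - 1)).
  assert (hK0 : 2 + K0 * Rpower q (-1/2) <= K0).
  { replace (-1/2) with (- (1/2)) by field. rewrite Rpower_Ropp. fold T. fold r.
    unfold K0. right. field. split; lra. }
  assert (hK01 : 1 <= K0).
  { unfold K0. apply Rmult_le_reg_r with (r - 1); [lra|]. field_simplify; lra. }
  assert (hlnq : 0 < ln q) by (rewrite <- ln_1; apply ln_increasing; lra).
  set (L := 8 / ln q).
  assert (hL : 0 < L) by (unfold L; apply Rdiv_lt_0_compat; lra).
  assert (HLn : forall l : nat, 2 * INR l <= L * T (INR l * IZR c / 4)).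
  { intros l. unfold T, Rpower. assert (H := exp_ineq1_le (INR l * IZR c / 4 * ln q)).
    assert (0 <= INR l) by apply pos_INR. apply IZR_le in hc.
    assert (INR l <= INR l * IZR c) by nra.
    apply Rle_trans with (L * (1 + INR l * IZR c / 4 * ln q)); [|apply Rmult_le_compat_l; lra].
    unfold L. field_simplify; [|lra]. apply Rmult_le_reg_r with (ln q); [lra|].
    field_simplify; [|lra]. nra. }
  exists (F * (K0 + L) + T (IZR K)).
  intros n f [w [Hin [Hlen Hprod]]].
  assert (Hs : sig w = 0%Z) by (rewrite <- snd_word with (p := p), Hprod; reflexivity).
  assert (Hf : fst (word_prod p w) = f) by (rewrite Hprod; reflexivity).
  destruct (core q hq c hc K0 hK0 hK01 w (fun x Hx => Hsnd x (Hin x Hx))) as [J HA].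
  rewrite Hs in J, HA.
  set (l := length w) in *. set (m := mn w) in *.
  destruct (mn_le w) as [Hm0 _]. fold m in Hm0.
  assert (Hc1 : 1 <= IZR c) by (apply IZR_le; lia).
  set (e := INR l * IZR c).
  assert (He : IZR (2 * (Z.of_nat l * c + Z.abs 0) + 4 * m) / 4 = e / 2 + IZR m).
  { unfold e. rewrite INR_IZR_INZ. simpl Z.abs. rewrite plus_IZR, !mult_IZR, plus_IZR, mult_IZR. simpl. field. }
  rewrite He in HA. fold T in HA. assert (T0 : T (IZR 0) = 1) by (unfold T; simpl; apply Rpower_O; lra). rewrite T0 in HA.
  assert (Hfb := fst_bound p hp F HF w (fun x Hx => proj1 (HFK x (Hin x Hx)))).
  rewrite Hs, Hf in Hfb. fold q in Hfb. fold T in Hfb. rewrite T0 in Hfb.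
  assert (Hint := int_word p hp0 K w (fun x Hx => proj2 (HFK x (Hin x Hx)))).
  rewrite Hs, Hf in Hint. fold m in Hint. destruct Hint as [z Hz].
  assert (Hd : forall d, is_denom p f d -> d <= T (IZR K) * T (- IZR m)).
  { intros d [k [Hdk [_ Hmin]]].
    assert (HKm : (0 <= K + 0 - m)%Z) by lia.
    assert (Hk := Hmin (Z.to_nat (K + 0 - m)) z).
    assert (Hpw : powerRZ (IZR p) (K + 0 - m) = IZR p ^ Z.to_nat (K + 0 - m)).
    { rewrite pow_powerRZ, Z2Nat.id; auto. }
    assert (Hne : IZR p ^ Z.to_nat (K + 0 - m) <> 0) by (apply pow_nonzero; auto).
    assert (Hk' : (k <= Z.to_nat (K + 0 - m))%nat).
    { apply Hk. rewrite <- Hz, Hpw. field. auto. }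
    rewrite Hdk. fold q.
    apply Rle_trans with (q ^ Z.to_nat (K + 0 - m)). apply Rle_pow; auto; lra.
    unfold T. rewrite <- Rpower_plus, <- Rpower_pow by lra.
    right. f_equal. rewrite INR_IZR_INZ, Z2Nat.id by lia. rewrite minus_IZR, plus_IZR. simpl. ring. }
  assert (HlN : INR l <= INR n) by (apply le_INR; auto).
  assert (HeN : e <= INR n * IZR c) by (unfold e; apply Rmult_le_compat_r; lra).
  assert (Hl0 : 0 <= INR l) by apply pos_INR.
  assert (Hmz : IZR m <= 0) by (apply IZR_le in Hm0; exact Hm0).
  assert (HJ : - IZR m <= e / 2).
  { apply IZR_le in J. rewrite minus_IZR, !mult_IZR in J. unfold e. rewrite INR_IZR_INZ. simpl in J. lra. }
  assert (Hl2 : 2 * INR l <= L * T (INR n * IZR c / 4)).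
  { apply Rle_trans with (L * T (INR l * IZR c / 4)); auto. apply Rmult_le_compat_l; [lra|]. apply Tmono.
    fold e. lra. }
  assert (T4 : T (INR n * IZR c / 4) <= T (INR n * IZR c / 2)).
  { apply Tmono. assert (0 <= INR n * IZR c) by (apply Rmult_le_pos; lra || apply pos_INR). lra. }
  assert (TK := Tpos (IZR K)).
  assert (Tn4 := Tpos (INR n * IZR c / 4)).
  assert (Tn2 := Tpos (INR n * IZR c / 2)).
  assert (hFA : Rabs f <= F * (K0 * T (e / 2 + IZR m) + 2 * INR l)).
  { apply Rle_trans with (F * Asum q w). lra. apply Rmult_le_compat_l; auto.
    assert (0 < T 0) by apply Tpos. lra. }
  assert (Hfgen : forall X, T (e / 2 + IZR m) <= X -> L * T (INR n * IZR c / 4) <= L * X ->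
     Rabs f <= (F * (K0 + L) + T (IZR K)) * X).
  { intros X H1 H2. apply Rle_trans with (F * (K0 * X + L * X)).
    { apply Rle_trans with (1 := hFA). apply Rmult_le_compat_l; auto.
      assert (K0 * T (e / 2 + IZR m) <= K0 * X) by (apply Rmult_le_compat_l; lra). lra. }
    assert (0 <= X) by (apply Rle_trans with (T (e / 2 + IZR m)); auto; left; auto).
    assert (0 <= T (IZR K) * X) by (apply Rmult_le_pos; lra). nra. }
  assert (Hdgen : forall X, T (- IZR m) <= X -> forall d, is_denom p f d ->
     d <= (F * (K0 + L) + T (IZR K)) * X).
  { intros X H1 d Hdd. apply Rle_trans with (1 := Hd d Hdd).
    assert (0 <= X) by (apply Rle_trans with (T (- IZR m)); auto; left; auto).
    assert (T (IZR K) * T (- IZR m) <= T (IZR K) * X) by (apply Rmult_le_compat_l; lra).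
    assert (0 <= F * (K0 + L) * X) by (apply Rmult_le_pos; [apply Rmult_le_pos|]; lra). nra. }
  assert (Hl' : IZR (Z.of_nat l) * IZR c = e) by (unfold e; now rewrite INR_IZR_INZ).
  split; [|split].
  - destruct (Z_lt_le_dec (4 * m + Z.of_nat l * c) 0) as [Hlt|Hge].
    + left. apply Hfgen; [|apply Rmult_le_compat_l; lra]. apply Tmono.
      apply IZR_lt in Hlt. rewrite plus_IZR, !mult_IZR in Hlt. unfold e. rewrite INR_IZR_INZ. rewrite Hl' in Hlt. lra.
    + right. apply Hdgen. apply Tmono.
      apply IZR_le in Hge. rewrite plus_IZR, !mult_IZR, Hl' in Hge. lra.
  - apply Hfgen; [|apply Rmult_le_compat_l; lra]. apply Tmono. lra.
  - apply Hdgen. apply Tmono. lra.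
Qed.
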